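(* For every positive integer $d$, $$e^*_6(d^2)=36\Bigl(e^*_1(d^2)-\tfrac35\,e^*_1(d_2^2)-\tfrac45\,e^*_1(d_3^2)+\tfrac{12}{25}\,e^*_1(d_6^2)\Bigr),$$ where $d_m=d/\prod_{p\mid m}p^{\nu_p(d)}$ is the largest divisor of $d$ coprime to $m$.
   Context: $\nu_p$ is the $p$-adic valuation. $\gamma_c(d^2)$ is multiplicative in $c$ with $\gamma_1=1$ and: $\gamma_{2^r}(d^2)=2^{r/2}$ if $r\ge2$ even and $\nu_2(d^2)=r-2$; $=2^{(r-1)/2}$ if $r$ odd and $\nu_2(d^2)\ge r-1$; $=0$ otherwise; for odd $p$, $\gamma_{p^r}(d^2)=p^{r/2-1}(p-1)$ if $r\ge2$ even and $\nu_p(d^2)\ge r$; $=p^{(r-1)/2}$ if $r$ odd and $\nu_p(d^2)=r-1$; $=0$ otherwise. $e^*_k(d^2)=\sum_{c\ge1}\frac{\gcd(c,2k)^2}{c^2}\gamma_c(d^2)$. *)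

(* Defs.v *)
From Stdlib Require Import Reals.
From mathcomp Require Import all_boot.

Set Implicit Arguments.
Unset Strict Implicit.
Unset Printing Implicit Defensive.

(* gamma_{p^r}(n) for a prime p and r >= 1, where v = nu_p(n). *)
Definition gamma_pp (p r v : nat) : nat :=
  if p == 2 then
    if ~~ odd r then (if (2 <= r) && (v == r - 2) then 2 ^ (r %/ 2) else 0)
    else (if r.-1 <= v then 2 ^ (r.-1 %/ 2) else 0)
  else
    if ~~ odd r then (if (2 <= r) && (r <= v) then p ^ (r %/ 2 - 1) * (p - 1) else 0)
    else (if v == r.-1 then p ^ (r.-1 %/ 2) else 0).

Definition gamma (c n : nat) : nat :=
  \prod_(p <- primes c) gamma_pp p (logn p c) (logn p n).

(* c-th term (c >= 1) of the series defining e*_k(n). *)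
Definition estar_term (k n c : nat) : R :=
  Rmult (Rdiv (pow (INR (gcdn c (2 * k))) 2) (pow (INR c) 2)) (INR (gamma c n)).

Definition dpart (d m : nat) : nat :=
  d %/ \prod_(p <- primes m) p ^ logn p d.

(* Main.v *)
Require Import Defs.
From Stdlib Require Import Reals.
From mathcomp Require Import all_boot.
From mathcomp Require Import all_order all_algebra zify.
From mathcomp Require Import Rstruct.
From mathcomp.algebra_tactics Require Import ring lra.

Lemma gcdM x y z : coprime x y -> gcdn (x * y) z = gcdn x z * gcdn y z.
Proof.
move=> cxy; apply/eqP; rewrite eqn_dvd; apply/andP; split.
  rewrite muln_gcdr !muln_gcdl !dvdn_gcd ?dvdn_gcdl //=.
  apply/and3P; split.
  - exact: dvdn_mulr (dvdn_gcdr _ _).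
  - exact: dvdn_mull _ (dvdn_gcdr _ _).
  - exact: dvdn_mulr (dvdn_gcdr _ _).
rewrite dvdn_gcd; apply/andP; split.
  by rewrite dvdn_mul ?dvdn_gcdl.
rewrite Gauss_dvd ?dvdn_gcdr //.
by rewrite (coprime_dvdl (dvdn_gcdl _ _)) // (coprime_dvdr (dvdn_gcdl _ _)).
Qed.

Lemma gammaM x y n : 0 < x -> 0 < y -> coprime x y ->
  gamma (x * y) n = gamma x n * gamma y n.
Proof.
move=> x0 y0 cxy; rewrite /gamma.
have pe : perm_eq (primes (x * y)) (primes x ++ primes y).
  apply: uniq_perm.
  - exact: primes_uniq.
  - rewrite cat_uniq !primes_uniq /= andbT; apply/hasPn => p /= py.
    apply/negP => px; move: (cxy).
    rewrite coprime_has_primes //; move/hasPn/(_ p py); by rewrite px.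
  - by move=> p; rewrite primesM // mem_cat.
rewrite (perm_big _ pe) big_cat /=; congr (_ * _); apply: eq_big_seq => p pp.
  move: (pp); rewrite mem_primes => /and3P [pr _ pdx].
  by rewrite lognM // [logn p y]logn_coprime ?addn0 // (coprime_dvdl pdx cxy).
move: (pp); rewrite mem_primes => /and3P [pr _ pdy].
rewrite coprime_sym in cxy.
by rewrite lognM // [logn p x]logn_coprime ?add0n // (coprime_dvdl pdy cxy).
Qed.

Lemma gamma1 n : gamma 1 n = 1.
Proof. by rewrite /gamma big_nil. Qed.

Lemma gamma_pexp p a n : prime p -> 0 < a ->
  gamma (p ^ a) n = gamma_pp p a (logn p n).
Proof.
move=> pp a0; rewrite /gamma primesX // primes_prime // big_seq1 pfactorK //.
Qed.

Lemma gamma_eq m n n' : (forall p, p \in primes m -> logn p n = logn p n') ->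
  gamma m n = gamma m n'.
Proof. by move=> h; apply: eq_big_seq => p /h ->. Qed.

Definition mpart c := c %/ (2 ^ logn 2 c * 3 ^ logn 3 c).

Lemma cop6 q : coprime q 6 = coprime 2 q && coprime 3 q.
Proof. by rewrite (_ : 6 = 2 * 3) // coprimeMr !(coprime_sym q). Qed.

Lemma logn_unique a b q : 0 < q -> coprime q 6 ->
  logn 2 (2 ^ a * 3 ^ b * q) = a /\ logn 3 (2 ^ a * 3 ^ b * q) = b.
Proof.
move=> q0; rewrite cop6 => /andP [c2 c3].
have h2 : 0 < 2 ^ a by rewrite expn_gt0.
have h3 : 0 < 3 ^ b by rewrite expn_gt0.
rewrite !lognM ?muln_gt0 ?h2 ?h3 // !pfactorK // !lognX.
by rewrite !logn_coprime // !muln0 !addn0.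
Qed.

Lemma decomp c : 0 < c ->
  c = 2 ^ logn 2 c * 3 ^ logn 3 c * mpart c /\ coprime (mpart c) 6 /\ 0 < mpart c.
Proof.
move=> c0.
have [c1 cop1 e1] := pfactor_coprime (isT : prime 2) c0.
have c10 : 0 < c1 by move: c0; rewrite e1 muln_gt0 => /andP [].
have [m cop2 e2] := pfactor_coprime (isT : prime 3) c10.
have m0 : 0 < m by move: c10; rewrite e2 muln_gt0 => /andP [].
have cm6 : coprime m 6.
  rewrite cop6 cop2 andbT; move: cop1; by rewrite e2 coprimeMr => /andP [].
have ec : c = 2 ^ logn 2 c * 3 ^ logn 3 c1 * m by rewrite {1}e1 {1}e2; nia.
have [l2 l3] := logn_unique (logn 2 c) (logn 3 c1) m m0 cm6.
rewrite -ec in l3.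
have em : mpart c = m.
  by rewrite /mpart l3 {1}ec mulKn // muln_gt0 !expn_gt0.
by rewrite em l3 -{1}ec.
Qed.

Lemma dvd_coprime_part a b c : 0 < c -> 2 ^ a * 3 ^ b %| c ->
  coprime (c %/ (2 ^ a * 3 ^ b)) 6 -> a = logn 2 c /\ b = logn 3 c /\ c %/ (2 ^ a * 3 ^ b) = mpart c.
Proof.
move=> c0 dv cp.
have t0 : 0 < 2 ^ a * 3 ^ b by rewrite muln_gt0 !expn_gt0.
have ec : c = 2 ^ a * 3 ^ b * (c %/ (2 ^ a * 3 ^ b)) by rewrite mulnC divnK.
have q0 : 0 < c %/ (2 ^ a * 3 ^ b) by rewrite divn_gt0 // dvdn_leq.
have [l2 l3] := logn_unique a b _ q0 cp.
rewrite -ec in l2 l3.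
by rewrite /mpart l2 l3.
Qed.

Lemma gamma_pp_le p r v : prime p -> p != 2 -> gamma_pp p r v <= p ^ v.
Proof.
move=> pp p2; have p1 : 0 < p by exact: prime_gt0.
rewrite /gamma_pp (negbTE p2).
case: (odd r) => /=.
  case: eqP => // ->; apply: leq_pexp2l => //; lia.
case: ifP => // /andP [r2 rv].
apply: (@leq_trans (p ^ (r %/ 2 - 1) * p)).
  by rewrite leq_mul2l; apply/orP; right; lia.
rewrite -expnSr; apply: leq_pexp2l => //; lia.
Qed.

Lemma cop_prod p (s : seq nat) (f : nat -> nat) : prime p -> all prime s -> p \notin s ->
  coprime p (\prod_(q <- s) q ^ f q).
Proof.
move=> pp; elim: s => [|q s IH] /=; first by rewrite big_nil coprimen1.
case/andP=> pq ps; rewrite in_cons negb_or => /andP [npq nps].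
rewrite big_cons coprimeMr IH // andbT coprimeXr //.
by rewrite prime_coprime // dvdn_prime2 // eq_sym.
Qed.

Lemma prod_dvd (s : seq nat) n : 0 < n -> uniq s -> all prime s ->
  \prod_(p <- s) p ^ logn p n %| n.
Proof.
move=> n0; elim: s => [|p s IH] /=; first by rewrite big_nil dvd1n.
case/andP=> nps us /andP [pp ps].
rewrite big_cons Gauss_dvd ?pfactor_dvdnn ?IH //.
by rewrite coprimeXl // cop_prod.
Qed.

Lemma gamma_le m n : 0 < n -> coprime m 6 -> gamma m n <= n.
Proof.
move=> n0 cm.
apply: (@leq_trans (\prod_(p <- primes m) p ^ logn p n)); last first.
  apply: dvdn_leq => //; apply: prod_dvd => //; first exact: primes_uniq.
  by apply/allP => p; rewrite mem_primes => /andP [].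
rewrite /gamma big_seq [X in _ <= X]big_seq; apply: leq_prod => p.
rewrite mem_primes => /and3P [pp m0 pdm]; apply: gamma_pp_le => //.
apply/eqP => p2; move: cm; rewrite cop6 => /andP [c2 _].
by move: c2; rewrite prime_coprime // -p2 pdm.
Qed.

Import Order.TTheory GRing.Theory Num.Theory.
Local Open Scope ring_scope.

Lemma sumfE (f : nat -> R) n : sum_f_R0 f n = \sum_(i < n.+1) f i.
Proof.
elim: n => [|n IH] /=; first by rewrite big_ord1.
by rewrite big_ord_recr /= IH RplusE.
Qed.

Lemma cv_ext (u v : nat -> R) l : (forall n, u n = v n) -> Un_cv u l -> Un_cv v l.
Proof. by move=> e h eps /h [N HN]; exists N => n /HN; rewrite e. Qed.

Lemma cv_const (x : R) : Un_cv (fun _ => x) x.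
Proof.
move=> eps e0; exists 0%N => n _; rewrite /Rdist Rminus_diag Rabs_R0; exact: e0.
Qed.

Lemma cv_sum (I : Type) (r : seq I) (u : I -> nat -> R) (l : I -> R) :
  (forall i, Un_cv (u i) (l i)) ->
  Un_cv (fun n => \sum_(i <- r) u i n) (\sum_(i <- r) l i).
Proof.
move=> h; elim: r => [|i r IH].
  apply: (@cv_ext (fun _ => 0)); first by move=> n; rewrite big_nil.
  rewrite big_nil; exact: cv_const.
apply: (@cv_ext (fun n => Rplus (u i n) (\sum_(j <- r) u j n))).
  by move=> n; rewrite big_cons.
rewrite big_cons; exact: CV_plus.
Qed.

Lemma cv_scale (x : R) (u : nat -> R) l : Un_cv u l -> Un_cv (fun n => x * u n) (x * l).
Proof. move=> h; exact: (CV_mult _ _ _ _ (cv_const x) h). Qed.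

Definition Dl (t : nat) (h : nat -> R) (c : nat) : R :=
  if (t %| c)%N then h (c %/ t)%N else 0.

Lemma sum_Dl t h n : (0 < t)%N ->
  \sum_(i < n) Dl t h i.+1 = \sum_(i < n %/ t) h i.+1.
Proof.
move=> t0; elim: n => [|n IH]; first by rewrite div0n !big_ord0.
rewrite big_ord_recr /= IH /Dl.
rewrite divnS //; case: ifP => dv /=.
  rewrite add1n [in RHS]big_ord_recr /=; congr (_ + _); congr h.
  by rewrite dv add1n.
by rewrite addr0 add0n.
Qed.

Lemma cv_dil (h : nat -> R) t l : (0 < t)%N ->
  Un_cv (fun N => \sum_(i < N.+1) h i.+1) l ->
  Un_cv (fun N => \sum_(i < N.+1) Dl t h i.+1) l.
Proof.
move=> t0 hc eps /hc [N0 HN]; exists (t * N0.+1)%N => n /ssrnat.leP nge.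
rewrite sum_Dl //.
have hq : (N0.+1 <= n.+1 %/ t)%N by rewrite leq_divRL //; lia.
have -> : (n.+1 %/ t = ((n.+1 %/ t).-1).+1)%N by lia.
apply: HN; apply/ssrnat.leP; lia.
Qed.

Definition Hd (m0 : nat) (c : nat) : R :=
  if coprime c 6 then (gamma c (m0 ^ 2))%:R / (c%:R ^+ 2) else 0.

Lemma HdE m0 c : Hd m0 c =
  if coprime c 6 then (gamma c (m0 ^ 2))%:R / (c%:R ^+ 2) else 0.
Proof. by []. Qed.

Lemma Hd_ge0 m0 c : 0 <= Hd m0 c.
Proof. rewrite HdE; case: ifP => // _; by rewrite divr_ge0 ?ler0n ?exprn_ge0. Qed.

Lemma Hd_le m0 c : (0 < m0)%N -> Hd m0 c <= (m0 ^ 2)%:R * (c%:R ^+ 2)^-1.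
Proof.
move=> m00; rewrite HdE; case: ifP => cp.
  rewrite ler_wpM2r ?invr_ge0 ?exprn_ge0 ?ler0n // ler_nat gamma_le //.
  by rewrite expn_gt0 m00.
by rewrite mulr_ge0 ?invr_ge0 ?exprn_ge0 ?ler0n.
Qed.

Lemma sum_inv_sq n : \sum_(i < n) ((i.+1)%:R ^+ 2)^-1 <= 2 - 2 / (n.+1)%:R :> R.
Proof.
elim: n => [|n IH]; first by rewrite big_ord0 divr1 subrr.
rewrite big_ord_recr /=.
apply: (le_trans (lerD IH (lexx _))).
set x : R := (n.+1)%:R.
have x1 : 1 <= x by rewrite /x ler1n.
have -> : (n.+2)%:R = x + 1 :> R by rewrite /x -natr1.
have x0 : x != 0 by apply/eqP => e; rewrite e in x1; lra.
have x10 : x + 1 != 0 by apply/eqP => e; lra.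
rewrite -subr_ge0.
have -> : 2 - 2 / (x + 1) - (2 - 2 / x + (x ^+ 2)^-1) = (x - 1) / (x ^+ 2 * (x + 1)).
  field; have n0 : (0:R) <= n%:R := ler0n _ _.
  by apply/andP; split; apply/eqP => e; lra.
by rewrite divr_ge0 ?subr_ge0 // mulr_ge0 ?exprn_ge0; lra.
Qed.

Lemma cvH m0 : (0 < m0)%N -> exists L, Un_cv (fun N => \sum_(i < N.+1) Hd m0 i.+1) L.
Proof.
move=> m00.
have [L HL] : {L | Un_cv (fun N => \sum_(i < N.+1) Hd m0 i.+1) L}; last by exists L.
apply: growing_cv.
  move=> n; apply/RleP; rewrite [X in _ <= X]big_ord_recr /= lerDl; exact: Hd_ge0.
exists ((m0 ^ 2)%:R * 2) => x [i ->]; apply/RleP.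
apply: (@le_trans _ _ (\sum_(j < i.+1) (m0 ^ 2)%:R * (((j.+1)%:R ^+ 2)^-1))).
  by apply: ler_sum => j _; exact: Hd_le.
rewrite -mulr_sumr ler_wpM2l ?ler0n //.
apply: (le_trans (sum_inv_sq _)).
by rewrite lerBlDr lerDl divr_ge0 ?ler0n.
Qed.

Definition W (p k a v : nat) : R :=
  (gcdn (p ^ a) (2 * k))%:R ^+ 2 / (p ^ a)%:R ^+ 2 *
  (if a == 0%N then 1%N else gamma_pp p a v)%:R.

Definition Tm k i j m0 N c : R :=
  \sum_(a < N) \sum_(b < N) (W 2 k a (2 * i) * W 3 k b (2 * j)) * Dl (2 ^ a * 3 ^ b) (Hd m0) c.

Lemma WE p k a v : W p k a v = (gcdn (p ^ a) (2 * k))%:R ^+ 2 / (p ^ a)%:R ^+ 2 *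
  (if a == 0%N then 1%N else gamma_pp p a v)%:R.
Proof. by []. Qed.

Lemma TmE k i j m0 N c : Tm k i j m0 N c =
  \sum_(a < N) \sum_(b < N) (W 2 k a (2 * i) * W 3 k b (2 * j)) * Dl (2 ^ a * 3 ^ b) (Hd m0) c.
Proof. by []. Qed.

Lemma W2_vanish k a v : (v + 3 <= a)%N -> W 2 k a v = 0.
Proof.
move=> h; rewrite WE; have -> : (if a == 0%N then 1%N else gamma_pp 2 a v) = 0%N.
  have -> : (a == 0%N) = false by apply/eqP; lia.
  rewrite /gamma_pp /=; case: (odd a) => /=; case: ifP => //; lia.
by rewrite mulr0n mulr0.
Qed.

Lemma W3_vanish k a v : (v + 2 <= a)%N -> W 3 k a v = 0.
Proof.
move=> h; rewrite WE; have -> : (if a == 0%N then 1%N else gamma_pp 3 a v) = 0%N.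
  have -> : (a == 0%N) = false by apply/eqP; lia.
  rewrite /gamma_pp /=; case: (odd a) => /=; case: ifP => //; lia.
by rewrite mulr0n mulr0.
Qed.

Lemma estar_ring k n c :
  estar_term k n c = (gcdn c (2 * k))%:R ^+ 2 / c%:R ^+ 2 * (gamma c n)%:R.
Proof. by rewrite /estar_term RmultE RdivE !RpowE !INRE. Qed.

Lemma sum_collapse (N a0 : nat) (X : R) :
  \sum_(a < N) (if a == a0 :> nat then X else 0) = if (a0 < N)%N then X else 0.
Proof.
elim: N => [|N IH]; first by rewrite big_ord0.
rewrite big_ord_recr /= IH.
case: (ltnP a0 N) => h.
  have -> : (N == a0) = false by apply/eqP; lia.
  by rewrite addr0 (_ : (a0 < N.+1)%N = true) //; lia.
case: (eqVneq N a0) => [e|ne].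
  by rewrite -e ltnSn add0r.
rewrite (_ : (a0 < N.+1)%N = false) ?addr0 //.
apply/negbTE; by rewrite -leqNgt ltn_neqAle h andbT.
Qed.

Lemma gamma_ppow p a n : prime p ->
  gamma (p ^ a) n = if a == 0%N then 1%N else gamma_pp p a (logn p n).
Proof. by move=> pp; case: a => [|a]; [rewrite expn0 gamma1 | rewrite gamma_pexp]. Qed.

Lemma term_decomp k i j m0 N c :
  (2 * k %| 12)%N -> (0 < m0)%N -> coprime m0 6 ->
  (2 * i + 3 <= N)%N -> (2 * j + 2 <= N)%N -> (0 < c)%N ->
  estar_term k ((2 ^ i * 3 ^ j * m0) ^ 2) c = Tm k i j m0 N c.
Proof.
move=> dk m00 cm0 hi hj c0.
have [ec [cm mc0]] := decomp c c0.
move: ec cm mc0.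
move: (logn 2 c) (logn 3 c) (mpart c) => a0 b0 mc ec cm mc0.
have t0 : (0 < 2 ^ a0 * 3 ^ b0)%N by rewrite muln_gt0 !expn_gt0.
have [la lb] := logn_unique a0 b0 mc mc0 cm; rewrite -ec in la lb.
set X := W 2 k a0 (2*i) * W 3 k b0 (2*j) * Hd m0 mc.
have E : forall a b : nat,
    W 2 k a (2 * i) * W 3 k b (2 * j) * Dl (2 ^ a * 3 ^ b) (Hd m0) c
     = if a == a0 then (if b == b0 then X else 0) else 0.
  move=> a b; rewrite /Dl.
  case: ifP => dv.
    case hc: (coprime (c %/ (2 ^ a * 3 ^ b)) 6).
      have [ea [eb _]] := dvd_coprime_part a b c c0 dv hc.
      rewrite la in ea; rewrite lb in eb.
      by rewrite ea eb !eqxx {1}ec mulKn.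
    rewrite HdE hc mulr0.
    case: eqP => // ea; case: eqP => // eb.
    exfalso; move: hc; by rewrite ea eb {1}ec mulKn ?cm.
  rewrite mulr0.
  case: eqP => // ea; case: eqP => // eb.
  exfalso; move: dv; by rewrite ea eb {1}ec dvdn_mulr.
rewrite TmE (eq_bigr (fun a : 'I_N => if a == a0 :> nat then (if (b0 < N)%N then X else 0) else 0)); last first.
  move=> a _; rewrite (eq_bigr (fun b : 'I_N => if a == a0 :> nat then (if b == b0 :> nat then X else 0) else 0)); last by move=> b _; exact: E.
  case: eqP => _; first exact: sum_collapse.
  by rewrite big1.
rewrite sum_collapse.
have XE : estar_term k ((2 ^ i * 3 ^ j * m0) ^ 2) c = X.
  move: (cm); rewrite cop6 => /andP [c2 c3].
  have c23 : coprime (2 ^ a0) (3 ^ b0) by rewrite coprimeXl // coprimeXr.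
  have cmc : coprime (2 ^ a0 * 3 ^ b0) mc by rewrite coprimeMl !coprimeXl.
  have g : gcdn c (2 * k) = (gcdn (2 ^ a0) (2 * k) * gcdn (3 ^ b0) (2 * k))%N.
    rewrite {1}ec gcdM // gcdM //.
    have -> : gcdn mc (2 * k) = 1%N.
      apply/eqP; apply: (coprime_dvdr dk).
      by rewrite (_ : 12 = 2 * 2 * 3)%N // !coprimeMr !(coprime_sym mc) c2 c3.
    by rewrite muln1.
  have ln2 : logn 2 ((2 ^ i * 3 ^ j * m0) ^ 2) = (2 * i)%N.
    have [l2 _] := logn_unique i j m0 m00 cm0; by rewrite lognX l2 mulnC.
  have ln3 : logn 3 ((2 ^ i * 3 ^ j * m0) ^ 2) = (2 * j)%N.
    have [_ l3] := logn_unique i j m0 m00 cm0; by rewrite lognX l3 mulnC.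
  have gm : gamma mc ((2 ^ i * 3 ^ j * m0) ^ 2) = gamma mc (m0 ^ 2).
    apply: gamma_eq => p; rewrite mem_primes => /and3P [pp _ pdm].
    rewrite !lognX logn_Gauss //.
    have cp2 : coprime p 2 by rewrite coprime_sym (coprime_dvdr pdm).
    have cp3 : coprime p 3 by rewrite coprime_sym (coprime_dvdr pdm).
    by rewrite coprimeMr !coprimeXr.
  have gc : gamma c ((2 ^ i * 3 ^ j * m0) ^ 2) =
      ((if a0 == 0%N then 1%N else gamma_pp 2 a0 (2 * i)) *
       (if b0 == 0%N then 1%N else gamma_pp 3 b0 (2 * j)) * gamma mc (m0 ^ 2))%N.
    rewrite {1}ec gammaM ?gammaM ?expn_gt0 // ?muln_gt0 ?expn_gt0 //.
    by rewrite !gamma_ppow // ln2 ln3 gm.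
  rewrite estar_ring /X !WE HdE cm g gc {1}ec !natrM.
  have n2 : (2 ^ a0)%:R != 0 :> R by rewrite pnatr_eq0 expn_eq0.
  have n3 : (3 ^ b0)%:R != 0 :> R by rewrite pnatr_eq0 expn_eq0.
  have nm : mc%:R != 0 :> R by rewrite pnatr_eq0 -lt0n.
  by field; rewrite n2 n3 nm.
rewrite XE; case: (ltnP a0 N) => ha; case: (ltnP b0 N) => hb //; rewrite /X.
- have -> : W 3 k b0 (2 * j) = 0 by apply: W3_vanish; lia.
  by rewrite mulr0 mul0r.
- have -> : W 2 k a0 (2 * i) = 0 by apply: W2_vanish; lia.
  by rewrite !mul0r.
- have -> : W 2 k a0 (2 * i) = 0 by apply: W2_vanish; lia.
  by rewrite !mul0r.
Qed.

Lemma series_val k i j m0 N L :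
  (2 * k %| 12)%N -> (0 < m0)%N -> coprime m0 6 ->
  (2 * i + 3 <= N)%N -> (2 * j + 2 <= N)%N ->
  Un_cv (fun M => \sum_(c < M.+1) Hd m0 c.+1) L ->
  infinite_sum (fun c => estar_term k ((2 ^ i * 3 ^ j * m0) ^ 2) c.+1)
    ((\sum_(a < N) W 2 k a (2 * i)) * (\sum_(b < N) W 3 k b (2 * j)) * L).
Proof.
move=> dk m00 cm0 hi hj hL.
change (Un_cv (fun M => sum_f_R0 (fun c => estar_term k ((2 ^ i * 3 ^ j * m0) ^ 2) c.+1) M)
    ((\sum_(a < N) W 2 k a (2 * i)) * (\sum_(b < N) W 3 k b (2 * j)) * L)).
apply: (@cv_ext (fun M => \sum_(a < N) \sum_(b < N)
   (W 2 k a (2 * i) * W 3 k b (2 * j)) * \sum_(c < M.+1) Dl (2 ^ a * 3 ^ b) (Hd m0) c.+1)).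
  move=> M; rewrite sumfE.
  rewrite (eq_bigr (fun c : 'I_M.+1 => \sum_(a < N) \sum_(b < N)
     (W 2 k a (2 * i) * W 3 k b (2 * j)) * Dl (2 ^ a * 3 ^ b) (Hd m0) c.+1)); last first.
    by move=> c _; rewrite (term_decomp k i j m0 N) // TmE.
  rewrite [RHS]exchange_big /=; apply: eq_bigr => a _.
  rewrite [RHS]exchange_big /=; apply: eq_bigr => b _.
  by rewrite mulr_sumr.
rewrite !RmultE -mulrA mulr_suml.
apply: cv_sum => a; rewrite mulr_suml mulr_sumr.
apply: cv_sum => b; rewrite mulrA.
apply: cv_scale; apply: cv_dil => //.
by rewrite muln_gt0 !expn_gt0.
Qed.

Lemma sum_trunc (F : nat -> R) n N : (n <= N)%N -> (forall a, (n <= a)%N -> F a = 0) ->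
  \sum_(a < N) F a = \sum_(a < n) F a.
Proof.
move=> nN h; rewrite -(subnKC nN); elim: (N - n)%N => [|m IH]; first by rewrite addn0.
by rewrite addnS big_ord_recr /= IH h ?addr0 // leq_addr.
Qed.

Lemma W2_1_0 N : (3 <= N)%N -> \sum_(a < N) W 2 1 a 0 = 5 / 2.
Proof.
move=> hN; rewrite (sum_trunc (fun a => W 2 1 a 0) 3) //; last first.
  by move=> a ha; apply: W2_vanish.
rewrite !big_ord_recr big_ord0 /= !WE /=.
rewrite (_ : gcdn (2^0) (2*1) = 1)%N // (_ : gcdn (2^1) (2*1) = 2)%N //
  (_ : gcdn (2^2) (2*1) = 2)%N // (_ : gamma_pp 2 1 0 = 1)%N //
  (_ : gamma_pp 2 2 0 = 2)%N // (_ : 2 ^ 2 = 4)%N // (_ : 2 ^ 1 = 2)%N // (_ : 2 ^ 0 = 1)%N //.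
by field.
Qed.

Lemma W3_1_0 N : (3 <= N)%N -> \sum_(b < N) W 3 1 b 0 = 10 / 9.
Proof.
move=> hN; rewrite (sum_trunc (fun b => W 3 1 b 0) 2); first last.
- by move=> a ha; apply: W3_vanish.
- lia.
rewrite !big_ord_recr big_ord0 /= !WE /=.
rewrite (_ : gcdn (3^0) (2*1) = 1)%N // (_ : gcdn (3^1) (2*1) = 1)%N //
  (_ : gamma_pp 3 1 0 = 1)%N // (_ : 3 ^ 1 = 3)%N // (_ : 3 ^ 0 = 1)%N //.
by field.
Qed.

Lemma W2_6 N v : (2 <= N)%N ->
  \sum_(a < N) W 2 6 a v = 4 * \sum_(a < N) W 2 1 a v - 6.
Proof.
move=> hN.
have t : forall a, W 2 6 a v = 4 * W 2 1 a v - (if (a < 2)%N then 3 else 0).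
  case=> [|[|a]]; rewrite !WE /=.
  - rewrite (_ : gcdn (2^0) (2*6) = 1)%N // (_ : gcdn (2^0) (2*1) = 1)%N //.
    by rewrite (_ : 2 ^ 0 = 1)%N //; field.
  - rewrite (_ : gcdn (2^1) (2*6) = 2)%N // (_ : gcdn (2^1) (2*1) = 2)%N //.
    rewrite (_ : gamma_pp 2 1 v = 1)%N; last by rewrite /gamma_pp /=.
    by rewrite (_ : 2 ^ 1 = 2)%N //; field.
  - have e2 : (2 ^ a.+2 = 4 * 2 ^ a)%N by rewrite !expnS mulnA.
    rewrite (_ : gcdn (2^a.+2) (2*6) = 4)%N; last first.
      rewrite e2 (_ : 2 * 6 = 4 * 3)%N // -muln_gcdr.
      by rewrite (eqP (_ : coprime (2 ^ a)%N 3)) ?muln1 // coprimeXl.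
    rewrite (_ : gcdn (2^a.+2) (2*1) = 2)%N; last first.
      rewrite e2 (_ : 4 * 2 ^ a = 2 * (2 * 2 ^ a))%N; last by rewrite mulnA.
      by rewrite -muln_gcdr gcdn1 muln1.
    rewrite subr0; field; by rewrite pnatr_eq0 expn_eq0.
rewrite (eq_bigr (fun a : 'I_N => 4 * W 2 1 a v - (if (a < 2)%N then 3 else 0))); last by move=> a _; exact: t.
rewrite sumrB -mulr_sumr; congr (_ - _).
rewrite (sum_trunc (fun a => if (a < 2)%N then 3 else 0) 2) //; last by move=> a ha; rewrite ltnNge ha.
by rewrite !big_ord_recr big_ord0 /=; lra.
Qed.

Lemma W3_6 N v : (1 <= N)%N ->
  \sum_(b < N) W 3 6 b v = 9 * \sum_(b < N) W 3 1 b v - 8.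
Proof.
move=> hN.
have t : forall b, W 3 6 b v = 9 * W 3 1 b v - (if (b < 1)%N then 8 else 0).
  case=> [|b]; rewrite !WE /=.
  - rewrite (_ : gcdn (3^0) (2*6) = 1)%N // (_ : gcdn (3^0) (2*1) = 1)%N //.
    by rewrite (_ : 3 ^ 0 = 1)%N //; field.
  - have e3 : (3 ^ b.+1 = 3 * 3 ^ b)%N by rewrite expnS.
    rewrite (_ : gcdn (3^b.+1) (2*6) = 3)%N; last first.
      rewrite e3 (_ : 2 * 6 = 3 * 4)%N // -muln_gcdr.
      rewrite (eqP (_ : coprime (3 ^ b)%N 4)) ?muln1 //.
      by rewrite coprimeXl.
    rewrite (_ : gcdn (3^b.+1) (2*1) = 1)%N; last first.
      by apply/eqP; exact: (coprimeXl b.+1 (isT : coprime 3 (2*1))%N).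
    rewrite subr0; field; by rewrite pnatr_eq0 expn_eq0.
rewrite (eq_bigr (fun b : 'I_N => 9 * W 3 1 b v - (if (b < 1)%N then 8 else 0))); last by move=> b _; exact: t.
rewrite sumrB -mulr_sumr; congr (_ - _).
rewrite (sum_trunc (fun b => if (b < 1)%N then 8 else 0) 1) //; last by move=> b hb; rewrite ltnNge hb.
by rewrite !big_ord_recr big_ord0 /=; lra.
Qed.

Lemma dpart_eq d : (0 < d)%N ->
  let a := logn 2 d in let b := logn 3 d in let m := mpart d in
  [/\ d = (2 ^ a * 3 ^ b * m)%N, dpart d 2 = (2 ^ 0 * 3 ^ b * m)%N,
      dpart d 3 = (2 ^ a * 3 ^ 0 * m)%N & dpart d 6 = (2 ^ 0 * 3 ^ 0 * m)%N].
Proof.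
move=> d0 a b m.
have [ed _] := decomp d d0; rewrite -/a -/b -/m in ed.
split => //.
- rewrite /dpart primes_prime // big_seq1 -/a {1}ed -!mulnA mulKn ?expn_gt0 //.
  by rewrite expn0 mul1n.
- rewrite /dpart primes_prime // big_seq1 {1}ed -/b mulnAC mulnK ?expn_gt0 //.
  by rewrite expn0 muln1.
- rewrite /dpart (_ : primes 6 = [:: 2; 3]) // big_cons big_seq1 -/a -/b {1}ed muln1.
  by rewrite mulKn ?muln_gt0 ?expn_gt0 // !expn0 !mul1n.
Qed.


Local Close Scope ring_scope.
Local Open Scope R_scope.

Theorem corollary5p4 (d : nat) : (0 < d)%N ->
  exists e6 e1 e1_2 e1_3 e1_6 : R,
    infinite_sum (fun i => estar_term 6 (d ^ 2)%N i.+1) e6 /\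
    infinite_sum (fun i => estar_term 1 (d ^ 2)%N i.+1) e1 /\
    infinite_sum (fun i => estar_term 1 (dpart d 2 ^ 2)%N i.+1) e1_2 /\
    infinite_sum (fun i => estar_term 1 (dpart d 3 ^ 2)%N i.+1) e1_3 /\
    infinite_sum (fun i => estar_term 1 (dpart d 6 ^ 2)%N i.+1) e1_6 /\
    e6 = 36 * (e1 - 3 / 5 * e1_2 - 4 / 5 * e1_3 + 12 / 25 * e1_6).
Proof.
move=> d0.
have [ed e2 e3 e6] := dpart_eq d d0.
have [_ [cm m0]] := decomp d d0.
move: ed e2 e3 e6 cm m0; move: (logn 2 d) (logn 3 d) (mpart d) => a b m ed e2 e3 e6 cm m0.
have [L HL] := cvH m m0.
set N := (2 * a + 2 * b + 3)%N.
have s6 := series_val 6 a b m N L isT m0 cm ltac:(lia) ltac:(lia) HL.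
have s1 := series_val 1 a b m N L isT m0 cm ltac:(lia) ltac:(lia) HL.
have s12 := series_val 1 0 b m N L isT m0 cm ltac:(lia) ltac:(lia) HL.
have s13 := series_val 1 a 0 m N L isT m0 cm ltac:(lia) ltac:(lia) HL.
have s16 := series_val 1 0 0 m N L isT m0 cm ltac:(lia) ltac:(lia) HL.
rewrite -e2 in s12; rewrite -e3 in s13; rewrite -e6 in s16; rewrite -ed in s6 s1.
eexists; eexists; eexists; eexists; eexists.
split; first exact: s6.
split; first exact: s1.
split; first exact: s12.
split; first exact: s13.
split; first exact: s16.
clear s6 s1 s12 s13 s16 HL.
rewrite !muln0 W2_6 ?W3_6 ?W2_1_0 ?W3_1_0; try lia.
move: (\sum_(a0 < N) W 2 1 a0 (2 * a))%R (\sum_(b0 < N) W 3 1 b0 (2 * b))%R => x y.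
rewrite !RmultE !RminusE !RplusE !RdivE.
rewrite !IZRposE !INRE /=.
by field.
Qed.
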